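(* (1) (Modified LU decomposition) If $A$ is a complex $m\times m$ matrix with $\det(A^{(k)})\ne0$ for $k=1,\dots,m$ and $\det(\hat A^{(k)})\ne0$ for $k=1,\dots,m-1$, then there exist a unique lower triangular matrix $B$ and a unique upper triangular matrix $C$ with first diagonal entry $1$ and remaining first-row entries $0$ such that $A=B\cdot K\cdot C$, where $K$ is the $m\times m$ matrix with entries $1$ on the diagonal and on the superdiagonal and $0$ elsewhere. (2) (Modified Cholesky factorization for $(m-1)\times m$ matrices) If $A$ is a complex $(m-1)\times m$ matrix with $\det(A^{(k)})\ne0$ for $k=1,\dots,m-1$ and $\det(\hat A^{(k)})\ne0$ for $k=1,\dots,m-1$, then there exist a unique $(m-1)\times(m-1)$ lower triangular matrix $B$ and a unique $m\times m$ upper triangular matrix $C$ with first diagonal entry $1$ and remaining first-row entries $0$ such that $A=B\cdot K'\cdot C$, where $K'$ is the $(m-1)\times m$ matrix with entries $1$ in positions $(i,i)$ and $(i,i+1)$ for $i=1,\dots,m-1$ and $0$ elsewhere.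
   Context: For a matrix $A$, $A^{(k)}$ denotes its upper left $k\times k$ submatrix; $\hat A$ denotes the matrix obtained from $A$ by deleting its first column, and $\hat A^{(k)}$ the upper left $k\times k$ submatrix of $\hat A$. *)

(* Defs.v *)
From Stdlib Require Rdefinitions.
From HB Require Import structures.
From mathcomp Require Import all_boot all_order all_algebra.
From mathcomp Require Import complex.
From mathcomp Require Import Rstruct.
Set Implicit Arguments. Unset Strict Implicit. Unset Printing Implicit Defensive.
Import Order.TTheory GRing.Theory Num.Theory.
Local Open Scope ring_scope.

Definition CC : fieldType := (Rdefinitions.R)[i].

Definition ulsub (F : Type) (r c k : nat) (hr : (k <= r)%N) (hc : (k <= c)%N)
  (A : 'M[F]_(r, c)) : 'M[F]_k :=
  \matrix_(i < k, j < k) A (widen_ord hr i) (widen_ord hc j).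

Definition delcol1 (F : Type) (r c : nat) (A : 'M[F]_(r, c.+1)) : 'M[F]_(r, c) :=
  \matrix_(i < r, j < c) A i (lift ord0 j).

Definition lower_tri (F : nmodType) (r c : nat) (B : 'M[F]_(r, c)) : Prop :=
  forall (i : 'I_r) (j : 'I_c), (i < j)%N -> B i j = 0.

Definition upper_tri (F : nmodType) (r c : nat) (C : 'M[F]_(r, c)) : Prop :=
  forall (i : 'I_r) (j : 'I_c), (j < i)%N -> C i j = 0.

Definition first_row_e1 (F : pzSemiRingType) (n : nat) (C : 'M[F]_n.+1) : Prop :=
  C ord0 ord0 = 1 /\ forall j : 'I_n.+1, j != ord0 -> C ord0 j = 0.

(* K (square, r = c = m) and K' (r = m-1, c = m): ones at (i,i) and (i,i+1). *)
Definition Kmx (F : pzSemiRingType) (r c : nat) : 'M[F]_(r, c) :=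
  \matrix_(i < r, j < c) (((j : nat) == i) || ((j : nat) == i.+1))%:R.

(* Main.v *)
Require Import Defs.
From HB Require Import structures.
From mathcomp Require Import all_boot all_order all_algebra.
From mathcomp Require Import zify ring.
Set Implicit Arguments. Unset Strict Implicit. Unset Printing Implicit Defensive.
Import Order.TTheory GRing.Theory Num.Theory.
Local Open Scope ring_scope.


Lemma sum_delta (F : fieldType) (N p : nat) (f : 'I_N.+1 -> F) :
  \sum_(l < N.+1) (((l : nat) == p)%:R * f l) = if (p < N.+1)%N then f (inord p) else 0.
Proof.
case: ltnP => hp.
  rewrite (bigD1 (inord p)) //= inordK // eqxx mul1r big1 ?addr0 // => l hl.
  have -> : ((l : nat) == p) = false.
    by apply/negbTE; apply: contra hl => /eqP e; apply/eqP/val_inj; rewrite /= inordK.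
  by rewrite mul0r.
rewrite big1 // => l _.
have -> : ((l : nat) == p) = false by apply/negbTE; rewrite neq_ltn (leq_trans (ltn_ord l) hp).
by rewrite mul0r.
Qed.

Lemma mulKmxE (F : fieldType) r n c (E : 'M[F]_(n.+1, c)) (i : 'I_r) j :
  (i < n.+1)%N ->
  (Kmx F r n.+1 *m E) i j = E (inord i) j + (if (i.+1 < n.+1)%N then E (inord i.+1) j else 0).
Proof.
move=> hi; rewrite mxE.
have e1 := sum_delta i (fun l => E l j).
have e2 := sum_delta i.+1 (fun l => E l j).
rewrite hi /= in e1; rewrite -e1 -e2 -big_split /=; apply: eq_bigr => l _; rewrite !mxE.
case: (eqVneq (l : nat) i) => [->|h1].
  by rewrite ltn_eqF // mul0r addr0.
by rewrite (_ : false%:R = 0 :> F) // mul0r add0r.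
Qed.

Lemma ulsub_mul (F : fieldType) r p c k (hr : (k <= r)%N) (hp : (k <= p)%N) (hc : (k <= c)%N)
  (L : 'M[F]_(r, p)) (M : 'M[F]_(p, c)) :
  (forall (i : 'I_r) (l : 'I_p) (j : 'I_c), (i < k)%N -> (j < k)%N -> (k <= l)%N -> L i l * M l j = 0) ->
  ulsub hr hc (L *m M) = ulsub hr hp L *m ulsub hp hc M.
Proof.
move=> H; apply/matrixP => i j; rewrite !mxE.
rewrite (bigID (fun l : 'I_p => (l < k)%N)) /= [X in _ + X]big1 ?addr0; last first.
  move=> l; rewrite -leqNgt => hl; apply: H => //=.
rewrite (big_ord_narrow hp); apply: eq_bigr => l _; rewrite !mxE //.
Qed.

Lemma lower_mul (F : fieldType) a b c (L : 'M[F]_(a, b)) (M : 'M[F]_(b, c)) :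
  lower_tri L -> lower_tri M -> lower_tri (L *m M).
Proof.
move=> hL hM i j hij; rewrite mxE big1 // => l _.
case: (ltnP i l) => h; first by rewrite hL // mul0r.
by rewrite hM ?mulr0 //; apply: leq_ltn_trans h hij.
Qed.

Lemma upper_mul (F : fieldType) a b c (L : 'M[F]_(a, b)) (M : 'M[F]_(b, c)) :
  upper_tri L -> upper_tri M -> upper_tri (L *m M).
Proof.
move=> hL hM i j hij; rewrite mxE big1 // => l _.
case: (ltnP l i) => h; first by rewrite hL // mul0r.
by rewrite hM ?mulr0 //; apply: leq_trans hij h.
Qed.

Lemma upper_trE (F : fieldType) a b (M : 'M[F]_(a, b)) : upper_tri M <-> lower_tri M^T.
Proof.
split=> h i j hij; first by rewrite mxE h.
by have := h j i hij; rewrite mxE.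
Qed.

Lemma lower_det (F : fieldType) n (M : 'M[F]_n) : lower_tri M -> \det M = \prod_(i < n) M i i.
Proof. by move=> h; apply: det_trig; apply/is_trig_mxP. Qed.

Lemma upper_det (F : fieldType) n (M : 'M[F]_n) : upper_tri M -> \det M = \prod_(i < n) M i i.
Proof.
move=> /upper_trE h; rewrite -det_tr lower_det //; apply: eq_bigr => i _; by rewrite mxE.
Qed.

Lemma prod_neq0 (F : fieldType) n (f : 'I_n -> F) i : \prod_(j < n) f j != 0 -> f i != 0.
Proof.
by move=> h; apply: contraNneq h => e; rewrite (bigD1 i) //= e mul0r.
Qed.

Lemma lower_inv (F : fieldType) n (X : 'M[F]_n) :
  lower_tri X -> X \in unitmx -> lower_tri (invmx X).
Proof.
move=> hX uX.
have dX : forall j, X j j != 0.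
  move=> j; apply: (@prod_neq0 F n (fun j => X j j)).
  by rewrite -lower_det // -unitfE -unitmxE.
have ZX := mulVmx uX.
move=> i j; move: {2}(n - j)%N (leqnn (n - j)%N) => k; elim: k j => [|k IH] j hk hij.
  by have := ltn_ord j; lia.
have := congr1 (fun M : 'M[F]_n => M i j) ZX; rewrite !mxE (bigD1 j) //= big1.
  have -> : (i == j) = false by apply/negbTE; rewrite -val_eqE /= neq_ltn hij.
  rewrite addr0 => /eqP; rewrite mulf_eq0 (negbTE (dX j)) orbF.
  by move/eqP.
move=> l hl; case: (ltnP l j) => h; first by rewrite hX // mulr0.
have h' : (j < l)%N by rewrite ltn_neqAle h andbT; apply: contra hl => /eqP e; apply/eqP/val_inj.
rewrite IH ?mul0r //; last by apply: ltn_trans h'.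
have := ltn_ord l; lia.
Qed.

Lemma upper_inv (F : fieldType) n (X : 'M[F]_n) :
  upper_tri X -> X \in unitmx -> upper_tri (invmx X).
Proof.
move=> /upper_trE hX uX; apply/upper_trE; rewrite trmx_inv; apply: lower_inv => //.
by rewrite unitmx_tr.
Qed.

Lemma Kmx_upper (F : fieldType) r c : upper_tri (Kmx F r c).
Proof.
move=> i j hji; rewrite mxE.
by rewrite (ltn_eqF hji) (ltn_eqF (ltn_trans hji (ltnSn i))).
Qed.

Lemma KC_entry (F : fieldType) r n c (hrn : (r <= n.+1)%N) (E : 'M[F]_(n.+1, c)) (i : 'I_r) j :
  (Kmx F r n.+1 *m E) i j = E (widen_ord hrn i) j + (if (i.+1 < n.+1)%N then E (inord i.+1) j else 0).
Proof.
rewrite mulKmxE; last exact: (leq_trans (ltn_ord i) hrn).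
by congr (E _ j + _); apply/val_inj; rewrite /= inordK // (leq_trans (ltn_ord i) hrn).
Qed.

Lemma diag_mul (F : fieldType) r c (M : 'M[F]_r) (Y : 'M[F]_(r, c)) i j :
  (forall a b : 'I_r, a != b -> M a b = 0) -> (M *m Y) i j = M i i * Y i j.
Proof.
move=> h; rewrite mxE (bigD1 i) //= big1 ?addr0 // => l hl.
by rewrite h ?mul0r // eq_sym.
Qed.

Lemma ulsub_full (F : fieldType) r c (hrr : (r <= r)%N) (hrc : (r <= c)%N)
  (B : 'M[F]_r) (M : 'M[F]_(r, c)) :
  ulsub hrr hrc (B *m M) = B *m ulsub hrr hrc M.
Proof.
rewrite (ulsub_mul hrr hrr hrc); last by move=> i l j _ _ hl; have := ltn_ord l; lia.
by congr (_ *m _); apply/matrixP => i j; rewrite mxE; congr (B _ _); apply/val_inj.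
Qed.

Lemma ulsub_upper (F : fieldType) r c k (hr : (k <= r)%N) (hc : (k <= c)%N) (M : 'M[F]_(r, c)) :
  upper_tri M -> upper_tri (ulsub hr hc M).
Proof. by move=> h i j hij; rewrite mxE h. Qed.

Lemma uniq_gen (F : fieldType) r n (hn : (n <= r)%N) (hrn : (r <= n.+1)%N)
  (A : 'M[F]_(r, n.+1)) (hA : \det (ulsub (leqnn r) hrn A) != 0)
  (B1 B2 : 'M[F]_r) (C1 C2 : 'M[F]_n.+1) :
  lower_tri B1 -> upper_tri C1 -> first_row_e1 C1 -> A = B1 *m Kmx F r n.+1 *m C1 ->
  lower_tri B2 -> upper_tri C2 -> first_row_e1 C2 -> A = B2 *m Kmx F r n.+1 *m C2 ->
  B2 = B1 /\ C2 = C1.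
Proof.
move=> lB1 uC1 [f10 f11] eA1 lB2 uC2 [f20 f21] eA2.
set K := Kmx F r n.+1 in eA1 eA2.
have uKC1 : upper_tri (K *m C1) by apply: upper_mul => //; apply: Kmx_upper.
have uKC2 : upper_tri (K *m C2) by apply: upper_mul => //; apply: Kmx_upper.
set W1 := ulsub (leqnn r) hrn (K *m C1).
set W2 := ulsub (leqnn r) hrn (K *m C2).
have eW1 : ulsub (leqnn r) hrn A = B1 *m W1 by rewrite eA1 -mulmxA ulsub_full.
have eW2 : ulsub (leqnn r) hrn A = B2 *m W2 by rewrite eA2 -mulmxA ulsub_full.
have uA : ulsub (leqnn r) hrn A \in unitmx by rewrite unitmxE unitfE.
have /andP [uB1 uW1] : (B1 \in unitmx) && (W1 \in unitmx) by rewrite -unitmx_mul -eW1.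
have /andP [uB2 uW2] : (B2 \in unitmx) && (W2 \in unitmx) by rewrite -unitmx_mul -eW2.
have dC1 : forall i : 'I_r, C1 (widen_ord hrn i) (widen_ord hrn i) != 0.
  move=> i; have := prod_neq0 (f := fun i => W1 i i) i.
  rewrite -upper_det; last by apply: ulsub_upper.
  have dW : \det W1 != 0 by rewrite -unitfE -unitmxE.
  move=> /(_ dW); rewrite mxE KC_entry.
  have wid : widen_ord (leqnn r) i = i by apply/val_inj.
  rewrite wid; case: ifP => hi1; last by rewrite addr0.
  by rewrite (uC1 (inord i.+1)) ?addr0 //= inordK.
set M := invmx B2 *m B1.
have eM : M *m (K *m C1) = K *m C2.
  by rewrite /M -!mulmxA (mulmxA B1) -eA1 eA2 -mulmxA mulKmx.
have eMW : M *m W1 = W2 by rewrite /W1 -ulsub_full eM.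
have lM : lower_tri M by apply: lower_mul => //; apply: lower_inv.
have uM : upper_tri M.
  have -> : M = W2 *m invmx W1 by rewrite -eMW mulmxK.
  apply: upper_mul; first by apply: ulsub_upper.
  by apply: upper_inv => //; apply: ulsub_upper.
have dM : forall a b : 'I_r, a != b -> M a b = 0.
  move=> a b hab; case: (ltngtP a b) => h; first by rewrite lM.
    by rewrite uM.
  by move: hab; rewrite -val_eqE /= h eqxx.
have Mii : forall i : 'I_r, (forall j, C2 (widen_ord hrn i) j = C1 (widen_ord hrn i) j) -> M i i = 1.
  move=> i hrow.
  have := congr1 (fun X : 'M[F]_(r, n.+1) => X i (widen_ord hrn i)) eM; rewrite /= diag_mul //.
  rewrite !KC_entry; case: ifP => hi1; last first.
    rewrite !addr0 hrow => /eqP; rewrite -subr_eq0 -{2}(mul1r (C1 _ _)) -mulrBl mulf_eq0.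
    by rewrite (negbTE (dC1 i)) orbF subr_eq0 => /eqP.
  have hlt : (widen_ord hrn i < @inord n i.+1)%N by rewrite /= inordK.
  rewrite (uC1 _ _ hlt) (uC2 _ _ hlt) !addr0 hrow => /eqP; rewrite -subr_eq0 -{2}(mul1r (C1 _ _)) -mulrBl mulf_eq0.
  by rewrite (negbTE (dC1 i)) orbF subr_eq0 => /eqP.
have rows : forall i : nat, (i <= n)%N -> forall j, C2 (inord i) j = C1 (inord i) j.
  move=> m; elim: m => [|i IH] hi j.
    case: (eqVneq j ord0) => [->|hj].
      by rewrite (_ : inord 0 = ord0) ?f10 ?f20 //; apply/val_inj; rewrite /= inordK.
    by rewrite (_ : inord 0 = ord0) ?f11 ?f21 //; apply/val_inj; rewrite /= inordK.
  have hir : (i < r)%N by lia.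
  set io := Ordinal hir.
  have hwi : widen_ord hrn io = inord i by apply/val_inj; rewrite /= inordK //; lia.
  have hM : M io io = 1 by apply: Mii => j'; rewrite hwi IH //; lia.
  have := congr1 (fun X : 'M[F]_(r, n.+1) => X io j) eM; rewrite /= diag_mul // hM mul1r.
  have hi1 : (i.+1 < n.+1)%N by lia.
  rewrite !KC_entry /= hi1 hwi IH; last by lia.
  by move/addrI/esym.
have eC : C2 = C1.
  apply/matrixP => i j; have := rows i (ltn_ord i) j.
  by rewrite (_ : inord i = i) //; apply/val_inj; rewrite /= inordK.
split=> //.
have M1 : M = 1%:M.
  apply/matrixP => a b; rewrite [1%:M a b]mxE; case: (eqVneq a b) => [<-|hab]; last by rewrite dM.
  by apply: Mii => j; rewrite eC.
by rewrite -(mulKVmx uB2 B1) -/M M1 mulmx1.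
Qed.

Lemma sum_delta_ord (F : fieldType) N (i : 'I_N) (f : 'I_N -> F) :
  \sum_(l < N) (((l : nat) == (i : nat))%:R * f l) = f i.
Proof.
rewrite (bigD1 i) //= eqxx mul1r big1 ?addr0 // => l hl.
by rewrite (_ : ((l : nat) == i) = false) ?mul0r //; apply/negbTE; rewrite val_eqE.
Qed.

Lemma delcol1_mul (F : fieldType) a b c (X : 'M[F]_(a, b)) (M : 'M[F]_(b, c.+1)) :
  delcol1 (X *m M) = X *m delcol1 M.
Proof. by apply/matrixP => i j; rewrite !mxE; apply: eq_bigr => l _; rewrite mxE. Qed.

Lemma ulsub_lower (F : fieldType) r k (hr : (k <= r)%N) (M : 'M[F]_r) :
  lower_tri M -> lower_tri (ulsub hr hr M).
Proof. by move=> h i j hij; rewrite mxE h. Qed.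

Lemma ulsub_lmul (F : fieldType) r c k (hr : (k <= r)%N) (hc : (k <= c)%N) (X : 'M[F]_r) (M : 'M[F]_(r, c)) :
  lower_tri X -> ulsub hr hc (X *m M) = ulsub hr hr X *m ulsub hr hc M.
Proof.
move=> h; apply: ulsub_mul => i l j hi _ hl.
by rewrite h ?mul0r //; apply: leq_trans hi hl.
Qed.

Lemma det_unit_lower (F : fieldType) r k (hr : (k <= r)%N) (M : 'M[F]_r) :
  lower_tri M -> (forall i, M i i = 1) -> \det (ulsub hr hr M) = 1.
Proof.
move=> h1 h2; rewrite lower_det; last exact: ulsub_lower.
by apply: big1 => i _; rewrite mxE h2.
Qed.

Lemma row_trick (F : fieldType) r c (hrc : (r <= c)%N) (A : 'M[F]_(r, c))
  (hA : forall k (hr : (k <= r)%N) (hc : (k <= c)%N), \det (ulsub hr hc A) != 0) :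
  exists X : 'M[F]_r, [/\ lower_tri X, (forall i, X i i = 1) & upper_tri (X *m A)].
Proof.
pose hri (i : 'I_r) := ltnW (ltn_ord i).
pose hci (i : 'I_r) := ltnW (leq_trans (ltn_ord i) hrc).
pose Ai (i : 'I_r) := ulsub (hri i) (hci i) A.
pose ai (i : 'I_r) : 'rV[F]_i := \row_(l < i) A i (widen_ord (hci i) l).
pose v (i : 'I_r) := - (ai i *m invmx (Ai i)).
pose X := \matrix_(i < r, l < r)
   (\sum_(l' < i) (((l : nat) == l')%:R * v i 0 l') + ((l : nat) == i)%:R).
exists X; split.
- move=> i l hil; rewrite mxE big1 ?add0r; last first.
    move=> l' _; rewrite (_ : ((l : nat) == l') = false) ?mul0r //.
    by apply/negbTE; rewrite neq_ltn (ltn_trans (ltn_ord l') hil) orbT.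
  by rewrite (gtn_eqF hil).
- move=> i; rewrite mxE big1 ?add0r ?eqxx // => l' _.
  by rewrite (gtn_eqF (ltn_ord l')) mul0r.
- move=> i j hji; rewrite mxE.
  under eq_bigr do rewrite mxE mulrDl.
  rewrite big_split /=.
  rewrite (sum_delta_ord i (fun l => A l j)).
  under eq_bigr do rewrite mulr_suml.
  rewrite exchange_big /=.
  under eq_bigr => l' _.
    under eq_bigr do rewrite -mulrA mulrCA.
    rewrite -mulr_sumr.
    rewrite (sum_delta_ord (widen_ord (hri i) l') (fun l => A l j)).
  over.
  rewrite /=.
  have uAi : Ai i \in unitmx by rewrite unitmxE unitfE; exact: hA.
  pose j' := Ordinal hji.
  have -> : \sum_(l' < i) v i 0 l' * A (widen_ord (hri i) l') j = (v i *m Ai i) 0 j'.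
    rewrite mxE; apply: eq_bigr => l' _; rewrite [Ai i _ _]mxE; congr (_ * A _ _).
    by apply/val_inj.
  rewrite /v mulNmx mulmxKV // !mxE.
  have -> : widen_ord (hci i) j' = j by apply/val_inj.
  by rewrite addrC subrr.
Qed.

Lemma sign2 (F : fieldType) k : (-1) ^+ k * (-1) ^+ k = 1 :> F.
Proof. by rewrite -exprMn mulrNN mulr1 expr1n. Qed.

Lemma exist_gen (F : fieldType) r n (hr0 : (0 < r)%N) (hn : (n <= r)%N) (hrn : (r <= n.+1)%N)
  (A : 'M[F]_(r, n.+1))
  (hA : forall k (hr : (k <= r)%N) (hc : (k <= n.+1)%N), \det (ulsub hr hc A) != 0)
  (hH : forall k (hr : (k <= r)%N) (hc : (k <= n)%N), (0 < k)%N -> \det (ulsub hr hc (delcol1 A)) != 0) :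
  exists (B : 'M[F]_r) (C : 'M[F]_n.+1),
    lower_tri B /\ upper_tri C /\ first_row_e1 C /\ A = B *m Kmx F r n.+1 *m C.
Proof.
have [X [lX dX uXA]] := row_trick hrn hA.
set U := X *m A in uXA.
set U0 := ulsub (leqnn r) hrn U.
have uU0 : U0 \in unitmx.
  rewrite unitmxE unitfE /U0 /U ulsub_lmul // det_mulmx det_unit_lower // mul1r.
  exact: hA.
set i0 : 'I_r := Ordinal hr0.
pose w (l : 'I_r) := invmx U0 i0 l.
have ew : forall j : 'I_r, \sum_(l < r) w l * U (widen_ord (leqnn r) l) (widen_ord hrn j) = ((i0 : nat) == j)%:R.
  move=> j; have := congr1 (fun M : 'M[F]_r => M i0 j) (mulVmx uU0).
  by rewrite !mxE /= => <-; apply: eq_bigr => l _; congr (_ * _); rewrite /U0 [RHS]mxE.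
have w0 : w i0 != 0.
  have := ew i0; rewrite (bigD1 i0) //= big1 ?addr0.
    by move=> h; apply/eqP => e; move: h; rewrite e mul0r => /esym/eqP; rewrite oner_eq0.
  move=> l hl; rewrite uXA ?mulr0 //= lt0n; apply: contra hl => /eqP e.
  by apply/eqP/val_inj.
have wnz : forall k, w k != 0.
  move=> k; case: (posnP k) => hk.
    by rewrite (_ : k = i0) //; apply/val_inj.
  apply/eqP => wk0.
  have hkr : (k <= r)%N := ltnW (ltn_ord k).
  have hkn : (k <= n)%N by have := ltn_ord k; lia.
  set H := ulsub hkr hkn (delcol1 U).
  have uH : H \in unitmx.
    rewrite unitmxE unitfE /H /U delcol1_mul ulsub_lmul // det_mulmx det_unit_lower // mul1r.
    exact: hH.
  pose w' : 'rV[F]_k := \row_(l < k) w (widen_ord hkr l).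
  have ew' : w' *m H = 0.
    apply/matrixP => a j; rewrite !mxE.
    have hj : (j.+1 < r)%N by have := ltn_ord j; have := ltn_ord k; lia.
    have := ew (Ordinal hj); rewrite /= => e.
    apply: (eq_trans _ e).
    rewrite (bigID (fun l : 'I_r => (l < k)%N)) /= [X in _ = _ + X]big1 ?addr0; last first.
      move=> l; rewrite -leqNgt => hl; case: (eqVneq (l : nat) k) => hlk.
        by rewrite (_ : l = k) ?wk0 ?mul0r //; apply/val_inj.
      rewrite uXA ?mulr0 //=; have := ltn_ord j; lia.
    rewrite (big_ord_narrow hkr); apply: eq_bigr => l _.
    rewrite [w' _ _]mxE [H _ _]mxE [delcol1 _ _ _]mxE.
    by congr (_ * U _ _); apply/val_inj.
  have : w' = 0 by rewrite -(mulmxK uH w') ew' mul0mx.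
  move/matrixP => /(_ 0 (Ordinal hk)); rewrite !mxE => e.
  by move: w0; rewrite (_ : i0 = widen_ord hkr (Ordinal hk)) ?e ?eqxx //; apply/val_inj.
pose d (l : 'I_r) := (-1) ^+ l * w l.
pose D := diag_mx (\row_l d l).
pose X' := D *m X.
pose U' := X' *m A.
have U'E : forall i j, U' i j = d i * U i j.
  by move=> i j; rewrite /U' /X' -mulmxA mul_diag_mx mxE mxE.
have uU' : upper_tri U' by move=> i j h; rewrite U'E uXA ?mulr0.
have key : forall j : 'I_n.+1, (j < r)%N -> \sum_(k < r) (-1) ^+ k * U' k j = ((j : nat) == 0)%:R.
  move=> j hj; have := ew (Ordinal hj); rewrite /= eq_sym => <-.
  apply: eq_bigr => k _; rewrite U'E /d !mulrA sign2 mul1r.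
  by congr (_ * U _ _); apply/val_inj.
pose Cf (i : nat) (j : 'I_n.+1) := \sum_(k < r | (k < i)%N) (-1) ^+ (i + k).+1 * U' k j
   + (-1) ^+ i * ((j : nat) == 0)%:R.
have Cf0 : forall (i : nat) (j : 'I_n.+1), (j < i)%N -> (j < r)%N -> Cf i j = 0.
  move=> i j hji hjr; rewrite /Cf.
  rewrite (eq_bigr (fun k : 'I_r => (-1) ^+ i.+1 * ((-1) ^+ k * U' k j))); last first.
    by move=> k _; rewrite mulrA -exprD addSn.
  rewrite big_mkcond /=.
  rewrite (eq_bigr (fun k : 'I_r => (-1) ^+ i.+1 * ((-1) ^+ k * U' k j))); last first.
    move=> k _; case: ifP => // /negbT; rewrite -leqNgt => h.
    by rewrite uU' ?mulr0 // (leq_trans hji h).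
  by rewrite -mulr_sumr key // exprS mulN1r mulNr addNr.
have CfS : forall (i : 'I_r) j, Cf i j + Cf i.+1 j = U' i j.
  move=> i j; rewrite /Cf.
  have e2 : \sum_(k < r | (k < i.+1)%N) (-1) ^+ (i.+1 + k).+1 * U' k j =
     U' i j - \sum_(k < r | (k < i)%N) (-1) ^+ (i + k).+1 * U' k j.
    rewrite (bigD1 i) ?ltnSn //=; congr (_ + _).
      have -> : (i.+1 + i).+1 = (2 * i.+1)%N by lia.
      by rewrite exprM expr2 mulrNN mulr1 expr1n mul1r.
    rewrite -sumrN; apply: eq_big => k.
      by rewrite -val_eqE /= ltnS ltn_neqAle andbC.
    by move=> _; rewrite addSn exprS mulN1r mulNr.
  rewrite e2 exprS mulN1r mulNr.
  set S := \sum_(k < r | (k < i)%N) _.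
  set t := _ * ((j : nat) == 0)%:R.
  ring.
pose C := \matrix_(i < n.+1, j < n.+1) Cf i j.
have KCe : Kmx F r n.+1 *m C = U'.
  have Ce : forall i j, C i j = Cf i j by move=> ? ?; rewrite mxE.
  apply/matrixP => i j; rewrite (KC_entry hrn) !Ce.
  case: ifP => h.
    by rewrite inordK //; exact: CfS.
  rewrite addr0 -(CfS i j) (Cf0 i.+1 j) ?addr0 //.
    by have := ltn_ord j; move/negbT: h; lia.
  by have := ltn_ord j; have := ltn_ord i; move/negbT: h; lia.
have lX' : lower_tri X'.
  apply: lower_mul => // a b hab; rewrite mxE.
  by rewrite (_ : (a == b) = false) ?mulr0n //; apply/negbTE; rewrite -val_eqE /= neq_ltn hab.
have uX : X \in unitmx.
  rewrite unitmxE unitfE lower_det // big1 ?oner_eq0 // => i _.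
have uX' : X' \in unitmx.
  rewrite unitmx_mul uX andbT unitmxE unitfE det_diag.
  apply/prodf_neq0 => i _; rewrite mxE /d mulf_neq0 ?signr_eq0 //.
exists (invmx X'), C; split; first exact: lower_inv.
split.
  move=> i j h; rewrite mxE Cf0 //; have := ltn_ord i; lia.
split.
  split.
    rewrite mxE /Cf big1 ?add0r; first by rewrite expr0 mul1r.
    by move=> k; rewrite ltn0.
  move=> j hj; rewrite mxE /Cf big1 ?add0r; last by move=> k; rewrite ltn0.
  by rewrite (_ : ((j : nat) == 0) = false) ?mulr0 //; apply/negbTE.
by rewrite -mulmxA KCe /U' mulKmx.
Qed.

Lemma hyp0 (F : fieldType) r c (A : 'M[F]_(r, c)) :
  (forall k (hr : (k <= r)%N) (hc : (k <= c)%N), (0 < k)%N -> \det (ulsub hr hc A) != 0) ->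
  forall k (hr : (k <= r)%N) (hc : (k <= c)%N), \det (ulsub hr hc A) != 0.
Proof.
move=> h k; case: k => [|k] hr hc; last exact: h.
by rewrite det_mx00 oner_eq0.
Qed.

Theorem theorem7p2 :
  (* (1) m = n.+1, A : m x m *)
  (forall (n : nat) (A : 'M[CC]_(n.+1, n.+1)),
     (forall (k : nat) (hr : (k <= n.+1)%N) (hc : (k <= n.+1)%N),
        (0 < k)%N -> \det (ulsub hr hc A) != 0) ->
     (forall (k : nat) (hr : (k <= n.+1)%N) (hc : (k <= n)%N),
        (0 < k)%N -> \det (ulsub hr hc (delcol1 A)) != 0) ->
     exists (B : 'M[CC]_(n.+1, n.+1)) (C : 'M[CC]_(n.+1, n.+1)),
       (lower_tri B /\ upper_tri C /\ first_row_e1 C /\ A = B *m Kmx _ _ _ *m C) /\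
       forall (B' : 'M[CC]_(n.+1, n.+1)) (C' : 'M[CC]_(n.+1, n.+1)),
         lower_tri B' -> upper_tri C' -> first_row_e1 C' ->
         A = B' *m Kmx _ _ _ *m C' -> B' = B /\ C' = C) /\
  (* (2) m = n.+1, A : (m-1) x m *)
  (forall (n : nat) (A : 'M[CC]_(n, n.+1)),
     (forall (k : nat) (hr : (k <= n)%N) (hc : (k <= n.+1)%N),
        (0 < k)%N -> \det (ulsub hr hc A) != 0) ->
     (forall (k : nat) (hr : (k <= n)%N) (hc : (k <= n)%N),
        (0 < k)%N -> \det (ulsub hr hc (delcol1 A)) != 0) ->
     exists (B : 'M[CC]_(n, n)) (C : 'M[CC]_(n.+1, n.+1)),
       (lower_tri B /\ upper_tri C /\ first_row_e1 C /\ A = B *m Kmx _ _ _ *m C) /\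
       forall (B' : 'M[CC]_(n, n)) (C' : 'M[CC]_(n.+1, n.+1)),
         lower_tri B' -> upper_tri C' -> first_row_e1 C' ->
         A = B' *m Kmx _ _ _ *m C' -> B' = B /\ C' = C).
Proof.
split.
  move=> n A hA hH; have hA' := hyp0 hA.
  have [B [C [lB [uC [fC eA]]]]] := exist_gen (ltn0Sn n) (leqnSn n) (leqnn _) hA' hH.
  exists B, C; split => // B' C' lB' uC' fC' eA'.
  exact: (uniq_gen (leqnSn n) (hA' _ _ _) lB uC fC eA lB' uC' fC' eA').
case=> [|n] A hA hH.
  exists 0, 1%:M; split.
    split; first by move=> i; case: i.
    split; first by move=> i j; rewrite !ord1.
    split; first by split; [rewrite mxE | move=> j; rewrite ord1 eqxx].
    by rewrite (flatmx0 A) (flatmx0 (_ *m _)).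
  move=> B' C' _ _ [f0 _] _; split; first exact: flatmx0.
  by apply/matrixP => i j; rewrite !ord1 mxE f0.
have hA' := hyp0 hA.
have [B [C [lB [uC [fC eA]]]]] := exist_gen (ltn0Sn n) (leqnn _) (leqnSn _) hA' hH.
exists B, C; split => // B' C' lB' uC' fC' eA'.
exact: (uniq_gen (leqnn n.+1) (hA' _ _ _) lB uC fC eA lB' uC' fC' eA').
Qed.
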